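(* Let $h,J\in\mathbb{R}$ with $J\neq 0$, let $\Gamma_{abs}>0$ and $\Gamma^z_{dph}>0$. Consider the two-qubit battery Hamiltonian $H_B$ and initial state $\rho_0$ described in the context, and for $\Gamma\ge 0$ let $\rho^{(\Gamma)}_t$ be the solution of the master equation $$\frac{d\rho}{dt}=-i[H_B,\rho]+\Gamma_{abs}\sum_{j=1}^{2}\Big(\sigma^+_j\rho\,\sigma^-_j-\tfrac12\{\sigma^-_j\sigma^+_j,\rho\}\Big)+\Gamma\sum_{j=1}^{2}\big(\sigma^z_j\rho\,\sigma^z_j-\rho\big),\qquad \rho(0)=\rho_0 .$$ Define the work gained $W_\Gamma(t)=\mathrm{Tr}(H_B\rho^{(\Gamma)}_t)-\mathrm{Tr}(H_B\rho_0)$. Then, in the transient regime, the work gained with local phase-flip noise exceeds the work gained without noise: there exists $t^*>0$ such that $W_{\Gamma^z_{dph}}(t)>W_0(t)$ for all $0<t<t^*$.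
   Context: Two qubits with computational basis $|00\rangle,|01\rangle,|10\rangle,|11\rangle$, where $\sigma^z|0\rangle=|0\rangle$, $\sigma^z|1\rangle=-|1\rangle$. $\sigma^x,\sigma^y,\sigma^z$ are the Pauli matrices, $\sigma^{\pm}=(\sigma^x\pm i\sigma^y)/2$, and $\sigma^a_1=\sigma^a\otimes I$, $\sigma^a_2=I\otimes\sigma^a$. The battery Hamiltonian (two-spin transverse Ising model) is, in the computational basis, $$H_B=\begin{pmatrix} h&0&0&J/4\\ 0&0&J/4&0\\ 0&J/4&0&0\\ J/4&0&0&-h\end{pmatrix}.$$ Set $e_0=-\sqrt{h^2+\tfrac{5J^2}{8}}$, $p=\frac{4(h+e_0)}{J}$, and let the initial state be $$\rho_0=\frac{1}{1+p^2}\begin{pmatrix} p^2&0&0&p\\ 0&0&0&0\\ 0&0&0&0\\ p&0&0&1\end{pmatrix}.$$ The terms with $\Gamma_{abs}$ model a local bosonic reservoir charging each spin (absorption channel); the terms with $\Gamma$ model local phase-flip (dephasing along $z$) noise on each spin; $\Gamma=0$ is the noiseless case. *)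

(* Defs.v *)
From HB Require Import structures.
From mathcomp Require Import all_boot all_order all_algebra.
From mathcomp Require Import complex mxtens.
From mathcomp Require Import all_classical all_reals all_analysis.
Set Implicit Arguments. Unset Strict Implicit. Unset Printing Implicit Defensive.
Import Order.TTheory GRing.Theory Num.Theory numFieldNormedType.Exports.
Local Open Scope classical_set_scope.
Local Open Scope ring_scope.

Section QBattery.
Variable R : realType.
Local Notation C := (R[i]).
Local Notation cst x := (Complex x 0).
Local Notation iC := (Complex 0 1 : C).

Definition reC (z : C) : R := let: Complex a _ := z in a.
Definition imC (z : C) : R := let: Complex _ b := z in b.

(* single-qubit operators in basis |0>,|1>, with sigma^z |0> = |0> *)
Definition sx : 'M[C]_2 := \matrix_(a < 2, b < 2) (if a != b then 1 else 0).
Definition sy : 'M[C]_2 :=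
  \matrix_(a < 2, b < 2)
    (if (a == 0%N :> nat) && (b == 1%N :> nat) then - iC
     else if (a == 1%N :> nat) && (b == 0%N :> nat) then iC else 0).
Definition sz : 'M[C]_2 :=
  \matrix_(a < 2, b < 2) (if a == b then (if a == 0%N :> nat then 1 else -1) else 0).
Definition splus : 'M[C]_2 := (cst (2^-1)) *: (sx + iC *: sy).
Definition sminus : 'M[C]_2 := (cst (2^-1)) *: (sx - iC *: sy).

(* two-qubit embeddings: sigma^a_1 = sigma^a (x) I, sigma^a_2 = I (x) sigma^a;
   the basis index of |a b> is 2a+b, i.e. |00>,|01>,|10>,|11>. *)
Definition on1 (A : 'M[C]_2) : 'M[C]_4 := A *t (1%:M : 'M[C]_2).
Definition on2 (A : 'M[C]_2) : 'M[C]_4 := (1%:M : 'M[C]_2) *t A.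

Definition HB (h J : R) : 'M[C]_4 :=
  \matrix_(k < 4, l < 4)
    (if (k == 0%N :> nat) && (l == 0%N :> nat) then cst h
     else if (k == 3%N :> nat) && (l == 3%N :> nat) then cst (- h)
     else if (k + l == 3)%N then cst (J / 4) else 0).

Definition e0 (h J : R) : R := - Num.sqrt (h ^+ 2 + 5 * J ^+ 2 / 8).
Definition pp (h J : R) : R := 4 * (h + e0 h J) / J.

Definition rho0 (h J : R) : 'M[C]_4 :=
  let p := pp h J in
  \matrix_(k < 4, l < 4)
    (cst (1 / (1 + p ^+ 2)) *
     (if (k == 0%N :> nat) && (l == 0%N :> nat) then cst (p ^+ 2)
      else if (k == 3%N :> nat) && (l == 3%N :> nat) then 1
      else if ((k == 0%N :> nat) && (l == 3%N :> nat)) ||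
              ((k == 3%N :> nat) && (l == 0%N :> nat)) then cst p
      else 0)).

Definition commut (A B : 'M[C]_4) := A *m B - B *m A.
Definition acommut (A B : 'M[C]_4) := A *m B + B *m A.

Definition lindblad (h J Gabs G : R) (rho : 'M[C]_4) : 'M[C]_4 :=
  - iC *: commut (HB h J) rho
  + cst Gabs *:
      (\sum_(j < 2)
        let sp := if j == 0%N :> nat then on1 splus else on2 splus in
        let sm := if j == 0%N :> nat then on1 sminus else on2 sminus in
        (sp *m rho *m sm - cst (2^-1) *: acommut (sm *m sp) rho))
  + cst G *:
      (\sum_(j < 2)
        let z := if j == 0%N :> nat then on1 sz else on2 sz in
        (z *m rho *m z - rho)).

Definition solves_ME (h J Gabs G : R) (rho : R -> 'M[C]_4) : Prop :=
  rho 0 = rho0 h J /\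
  (forall k l : 'I_4,
     {within [set t : R | 0 <= t], continuous (fun t => reC (rho t k l))} /\
     {within [set t : R | 0 <= t], continuous (fun t => imC (rho t k l))}) /\
  (forall t : R, 0 < t -> forall k l : 'I_4,
     is_derive t 1 (fun s => reC (rho s k l)) (reC (lindblad h J Gabs G (rho t) k l)) /\
     is_derive t 1 (fun s => imC (rho s k l)) (imC (lindblad h J Gabs G (rho t) k l))).

(* work gained W(t) = Tr(H_B rho_t) - Tr(H_B rho_0) (real part; it is real) *)
Definition work (h J : R) (rho : R -> 'M[C]_4) (t : R) : R :=
  reC (\tr (HB h J *m rho t) - \tr (HB h J *m rho0 h J)).

End QBattery.

(* Main.v *)
Require Import Defs.
From HB Require Import structures.
From mathcomp Require Import all_boot all_order all_algebra.
From mathcomp Require Import complex mxtens.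
From mathcomp Require Import all_classical all_reals all_analysis.
From mathcomp Require Import ring lra.
Set Implicit Arguments. Unset Strict Implicit. Unset Printing Implicit Defensive.
Import Order.TTheory GRing.Theory Num.Theory.
Import numFieldNormedType.Exports.
Local Open Scope classical_set_scope.
Local Open Scope ring_scope.
Section S.
Variable R : realType.
Local Notation C := (R[i]).
Local Notation cstC x := (Complex x 0).

Lemma reCD (x y : C) : reC (x + y) = reC x + reC y. Proof. by case: x; case: y. Qed.
Lemma imCD (x y : C) : imC (x + y) = imC x + imC y. Proof. by case: x; case: y. Qed.
Lemma reCN (x : C) : reC (- x) = - reC x. Proof. by case: x. Qed.
Lemma reCB (x y : C) : reC (x - y) = reC x - reC y. Proof. by rewrite reCD reCN. Qed.
Lemma reC_cstM (r : R) (z : C) : reC (cstC r * z) = r * reC z.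
Proof. case: z => a b /=. rewrite mul0r subr0 //. Qed.

Lemma repr4 (F : 'M[C]_4 -> R) :
  (forall A B, F (A + B) = F A + F B) -> (forall r A, F (cstC r *: A) = r * F A) ->
  forall M, F M = \sum_(k < 4) \sum_(l < 4)
     (reC (M k l) * F (delta_mx k l) + imC (M k l) * F (Complex 0 1 *: delta_mx k l)).
Proof.
move=> FD FZ M.
have F0 : F 0 = 0 by rewrite -(scaler0 _ (cstC 0)) FZ mul0r.
rewrite {1}(matrix_sum_delta M) (big_morph F FD F0); apply: eq_bigr => k _.
rewrite (big_morph F FD F0); apply: eq_bigr => l _.
case: (M k l) => x y /=.
have -> : Complex x y *: (delta_mx k l : 'M[C]_4) =
  cstC x *: delta_mx k l + cstC y *: (Complex 0 1 *: delta_mx k l).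
  rewrite scalerA -scalerDl; congr (_ *: _); apply/eqP; rewrite eq_complex /=.
  apply/andP; split; apply/eqP; ring.
by rewrite FD !FZ.
Qed.


Lemma commD (H A B : 'M[C]_4) : commut H (A + B) = commut H A + commut H B.
Proof. by rewrite /commut mulmxDr mulmxDl opprD addrACA. Qed.
Lemma commZ (H A : 'M[C]_4) c : commut H (c *: A) = c *: commut H A.
Proof. by rewrite /commut -scalemxAr -scalemxAl scalerBr. Qed.
Lemma termD (P Q M A B : 'M[C]_4) k :
  P *m (A + B) *m Q - k *: acommut M (A + B) =
  (P *m A *m Q - k *: acommut M A) + (P *m B *m Q - k *: acommut M B).
Proof.
rewrite /acommut mulmxDr mulmxDl mulmxDr mulmxDl addrACA scalerDr opprD addrACA //.
Qed.
Lemma termZ (P Q M A : 'M[C]_4) k c :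
  P *m (c *: A) *m Q - k *: acommut M (c *: A) =
  c *: (P *m A *m Q - k *: acommut M A).
Proof.
rewrite /acommut -!scalemxAr -!scalemxAl -scalerDr !scalerA mulrC -scalerA scalerBr //.
Qed.
Lemma termzD (P A B : 'M[C]_4) :
  P *m (A + B) *m P - (A + B) = (P *m A *m P - A) + (P *m B *m P - B).
Proof. by rewrite mulmxDr mulmxDl opprD addrACA. Qed.
Lemma termzZ (P A : 'M[C]_4) c :
  P *m (c *: A) *m P - (c *: A) = c *: (P *m A *m P - A).
Proof. by rewrite -scalemxAr -scalemxAl scalerBr. Qed.


Definition S1 (A : 'M[C]_4) := \sum_(j < 2)
        let sp := if j == 0%N :> nat then on1 (splus R) else on2 (splus R) in
        let sm := if j == 0%N :> nat then on1 (sminus R) else on2 (sminus R) in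
        (sp *m A *m sm - cstC (2^-1) *: acommut (sm *m sp) A).
Definition S2 (A : 'M[C]_4) := \sum_(j < 2)
        let z := if j == 0%N :> nat then on1 (sz R) else on2 (sz R) in
        (z *m A *m z - A).
Lemma lindE h J Ga G A : lindblad h J Ga G A =
  - Complex 0 1 *: commut (HB h J) A + cstC Ga *: S1 A + cstC G *: S2 A.
Proof. by []. Qed.
Lemma S1D A B : S1 (A + B) = S1 A + S1 B.
Proof. by rewrite /S1 -big_split; apply: eq_bigr => j _ /=; rewrite termD. Qed.
Lemma S2D A B : S2 (A + B) = S2 A + S2 B.
Proof. by rewrite /S2 -big_split; apply: eq_bigr => j _ /=; rewrite termzD. Qed.
Lemma S1Z A c : S1 (c *: A) = c *: S1 A.
Proof. by rewrite /S1 scaler_sumr; apply: eq_bigr => j _ /=; rewrite termZ. Qed.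
Lemma S2Z A c : S2 (c *: A) = c *: S2 A.
Proof. by rewrite /S2 scaler_sumr; apply: eq_bigr => j _ /=; rewrite termzZ. Qed.
Lemma rearrD (V : lmodType C) (k1 k2 k3 : C) (a b c d e f : V) :
  k1 *: (a + b) + k2 *: (c + d) + k3 *: (e + f) =
  (k1 *: a + k2 *: c + k3 *: e) + (k1 *: b + k2 *: d + k3 *: f).
Proof. by rewrite !scalerDr (addrACA (k1 *: a)) (addrACA (k1 *: a + k2 *: c)). Qed.
Lemma rearrZ (V : lmodType C) (k1 k2 k3 c : C) (a b e : V) :
  k1 *: (c *: a) + k2 *: (c *: b) + k3 *: (c *: e) =
  c *: (k1 *: a + k2 *: b + k3 *: e).
Proof. by rewrite !scalerDr !scalerA !(mulrC c). Qed.
Lemma linD h J Ga G (A B : 'M[C]_4) :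
  lindblad h J Ga G (A + B) = lindblad h J Ga G A + lindblad h J Ga G B.
Proof.
rewrite !lindE commD S1D S2D; exact: rearrD.
Qed.
Lemma linZ h J Ga G (A : 'M[C]_4) c :
  lindblad h J Ga G (c *: A) = c *: lindblad h J Ga G A.
Proof.
rewrite !lindE commZ S1Z S2Z; exact: rearrZ.
Qed.

Definition s1 (k : 'I_4) : C := if (k < 2)%N then 1 else -1.
Definition s2 (k : 'I_4) : C := if odd k then -1 else 1.
Lemma on1sz : on1 (sz R) = diag_mx (\row_k s1 k).
Proof.
apply/matrixP => k l; rewrite [RHS]mxE mxE /on1 /tensmx !mxE /s1.
case: k => [[|[|[|[|k]]]] Hk] //; case: l => [[|[|[|[|l]]]] Hl] //=;
  by rewrite ?mul1r ?mulr1 ?mul0r ?mulr0 ?mulr0n ?mulr1n.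
Qed.
Lemma on2sz : on2 (sz R) = diag_mx (\row_k s2 k).
Proof.
apply/matrixP => k l; rewrite [RHS]mxE mxE /on2 /tensmx !mxE /s2.
case: k => [[|[|[|[|k]]]] Hk] //; case: l => [[|[|[|[|l]]]] Hl] //=;
  by rewrite ?mul1r ?mulr1 ?mul0r ?mulr0 ?mulr0n ?mulr1n.
Qed.
Lemma S2E A k l : S2 A k l = (s1 k * s1 l + s2 k * s2 l - 2) * A k l.
Proof.
rewrite /S2 summxE !big_ord_recr big_ord0 /= add0r on1sz on2sz.
rewrite !mul_diag_mx !mul_mx_diag !mxE; ring.
Qed.
Lemma cstm8 : cstC (-8) = -8 :> C.
Proof. apply/eqP; rewrite eq_complex /=; apply/andP; split; apply/eqP; ring. Qed.
Lemma S2rho0 h J : \tr (HB h J *m S2 (rho0 h J)) =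
  cstC (J / 4) * cstC (1 / (1 + pp h J ^+ 2)) * cstC (pp h J) * cstC (-8).
Proof.
rewrite cstm8 /mxtrace !big_ord_recr big_ord0 /=.
rewrite !mxE !big_ord_recr !big_ord0 /= !S2E /s1 /s2 !mxE /=.
ring.
Qed.

Lemma cvg_sumI {T : Type} (F : set_system T) {FF : Filter F} n (f : 'I_n -> T -> R)
  (l : 'I_n -> R) : (forall i, f i @ F --> l i) ->
  (fun t => \sum_(i < n) f i t) @ F --> \sum_(i < n) l i.
Proof.
elim: n f l => [|n IH] f l H.
  have -> : (fun t => \sum_(i < 0) f i t) = (fun=> 0).
    by apply/funext => t; rewrite big_ord0.
  by rewrite big_ord0; exact: cvg_cst.
have -> : (fun t => \sum_(i < n.+1) f i t) =
   (fun t => \sum_(i < n) f (widen_ord (leqnSn n) i) t) + f ord_max.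
  by apply/funext => t; rewrite big_ord_recr.
rewrite big_ord_recr; apply: cvgD; last exact: H.
by apply: IH => i; exact: H.
Qed.

Lemma derive_sumI (x : R) n (f : 'I_n -> R -> R) (l : 'I_n -> R) :
  (forall i, is_derive x 1 (f i) (l i)) ->
  is_derive x 1 (fun t => \sum_(i < n) f i t) (\sum_(i < n) l i).
Proof.
elim: n f l => [|n IH] f l H.
  have -> : (fun t => \sum_(i < 0) f i t) = cst 0.
    by apply/funext => t; rewrite big_ord0.
  by rewrite big_ord0; exact: is_derive_cst.
have -> : (fun t => \sum_(i < n.+1) f i t) =
   (fun t => \sum_(i < n) f (widen_ord (leqnSn n) i) t) + f ord_max.
  by apply/funext => t; rewrite big_ord_recr.
rewrite big_ord_recr; apply: is_deriveD; try exact: H.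
by apply: IH => i; exact: H.
Qed.

Definition Sig (a b : 'I_4 -> 'I_4 -> R) (M : 'M[C]_4) : R :=
  \sum_(k < 4) \sum_(l < 4) (a k l * reC (M k l) + b k l * imC (M k l)).

Lemma cvg_Sig {T : Type} (F : set_system T) {FF : Filter F} a b (rho : T -> 'M[C]_4) (M : 'M[C]_4) :
  (forall k l, (fun t => reC (rho t k l)) @ F --> reC (M k l)) ->
  (forall k l, (fun t => imC (rho t k l)) @ F --> imC (M k l)) ->
  (fun t => Sig a b (rho t)) @ F --> Sig a b M.
Proof.
move=> Hr Hi; rewrite /Sig; apply: cvg_sumI => k; apply: cvg_sumI => l.
apply: cvgD; [exact: cvgMl_tmp | exact: cvgMl_tmp].
Qed.

Lemma derive_Sig (x : R) a b (rho : R -> 'M[C]_4) (M : 'M[C]_4) :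
  (forall k l, is_derive x 1 (fun t => reC (rho t k l)) (reC (M k l))) ->
  (forall k l, is_derive x 1 (fun t => imC (rho t k l)) (imC (M k l))) ->
  is_derive x 1 (fun t => Sig a b (rho t)) (Sig a b M).
Proof.
move=> Hr Hi; rewrite /Sig; apply: derive_sumI => k; apply: derive_sumI => l.
all: try by [].
Qed.

Definition Fr h J (M : 'M[C]_4) : R := reC (\tr (HB h J *m M)).
Lemma FrD h J A B : Fr h J (A + B) = Fr h J A + Fr h J B.
Proof. by rewrite /Fr mulmxDr mxtraceD reCD. Qed.
Lemma FrZ h J r A : Fr h J (cstC r *: A) = r * Fr h J A.
Proof. by rewrite /Fr -scalemxAr mxtraceZ reC_cstM. Qed.
Lemma FLD h J Ga G A B : Fr h J (lindblad h J Ga G (A + B)) =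
  Fr h J (lindblad h J Ga G A) + Fr h J (lindblad h J Ga G B).
Proof. by rewrite linD FrD. Qed.
Lemma FLZ h J Ga G r A : Fr h J (lindblad h J Ga G (cstC r *: A)) =
  r * Fr h J (lindblad h J Ga G A).
Proof. by rewrite linZ FrZ. Qed.
Lemma workE h J rho t : work h J rho t = Fr h J (rho t) - Fr h J (rho0 h J).
Proof. exact: reCB. Qed.
Lemma FrS2 h J : Fr h J (S2 (rho0 h J)) =
  J / 4 * (1 / (1 + pp h J ^+ 2)) * pp h J * (-8).
Proof. by rewrite /Fr S2rho0 -!mulrA !reC_cstM /= !mulrA. Qed.
Lemma lindG h J Ga G A : lindblad h J Ga G A = lindblad h J Ga 0 A + cstC G *: S2 A.
Proof.
rewrite !lindE; have -> : cstC 0 = 0 :> C by [].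
by rewrite scale0r addr0.
Qed.

Lemma repr4S (F : 'M[C]_4 -> R) :
  (forall A B, F (A + B) = F A + F B) -> (forall r A, F (cstC r *: A) = r * F A) ->
  forall M, F M = Sig (fun k l => F (delta_mx k l))
                      (fun k l => F (Complex 0 1 *: delta_mx k l)) M.
Proof.
move=> FD FZ M; rewrite (@repr4 F FD FZ M) /Sig; apply: eq_bigr => k _.
by apply: eq_bigr => l _; rewrite mulrC (mulrC (imC _)).
Qed.
Lemma pos_val (h J G : R) : J != 0 -> 0 < G ->
  0 < G * (J / 4 * (1 / (1 + pp h J ^+ 2)) * pp h J * (-8)).
Proof.
move=> hJ hG.
have Jp : J * pp h J = 4 * (h + e0 h J) by rewrite /pp; field.
have J2 : 0 < J ^+ 2 by rewrite exprn_even_gt0 //= hJ.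
have he : h + e0 h J < 0.
  rewrite /e0 subr_lt0; apply: le_lt_trans (ler_norm h) _.
  rewrite -sqrtr_sqr ltr_sqrt; last by rewrite ltr_pwDr ?sqr_ge0 //; lra.
  lra.
have q : 0 < 1 / (1 + pp h J ^+ 2).
  by rewrite divr_gt0 // ltr_pwDl ?sqr_ge0.
move: q; set qq := 1 / (1 + pp h J ^+ 2) => q.
have -> : G * (J / 4 * qq * pp h J * (-8)) = G * (- (h + e0 h J) * 8) * qq.
  have -> : G * (J / 4 * qq * pp h J * (-8)) = G * (J * pp h J) * qq * (-2) by field.
  by rewrite Jp; ring.
by rewrite mulr_gt0 // mulr_gt0 //; lra.
Qed.
End S.
Lemma near0_pos (R : realType) (g : R -> R) (c : R) :
  g t @[t --> within [set t : R | 0 <= t] (nbhs 0)] --> c -> 0 < c ->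
  exists2 e : R, 0 < e & forall t, 0 <= t -> t < e -> 0 < g t.
Proof.
move=> gc cp; have := cvgr_gt _ gc _ cp.
move=> H; have {H} : nbhs (0 : R) (fun t => 0 <= t -> 0 < g t) by exact: H.
move=> /nbhs_ballP [e e0 He]; exists e => // t t0 te.
apply: He => //; rewrite /ball /= sub0r normrN ger0_norm //.
Qed.
Global Opaque Sig Fr.

Unset Implicit Arguments.
Theorem theorem1 (R : realType) (h J Gabs Gdph : R)
  (hJ : J != 0) (hGabs : 0 < Gabs) (hGdph : 0 < Gdph)
  (rhoN rho0t : R -> 'M[R[i]]_4)
  (hN : solves_ME h J Gabs Gdph rhoN)
  (h0 : solves_ME h J Gabs 0 rho0t) :
  exists tstar : R, 0 < tstar /\
    forall t : R, 0 < t < tstar -> work h J rho0t t < work h J rhoN t.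
Proof.
move: hN h0 => [N0 [Ncont Nder]] [Z0 [Zcont Zder]].
pose a0 := fun k l => Fr h J (delta_mx k l : 'M[R[i]]_4).
pose b0 := fun k l => Fr h J (Complex 0 1 *: delta_mx k l : 'M[R[i]]_4).
pose aN := fun k l => Fr h J (lindblad h J Gabs Gdph (delta_mx k l)).
pose bN := fun k l => Fr h J (lindblad h J Gabs Gdph (Complex 0 1 *: delta_mx k l)).
pose aZ := fun k l => Fr h J (lindblad h J Gabs 0 (delta_mx k l)).
pose bZ := fun k l => Fr h J (lindblad h J Gabs 0 (Complex 0 1 *: delta_mx k l)).
have rF : forall M, Fr h J M = Sig a0 b0 M :=
  @repr4S R (Fr h J) (@FrD R h J) (@FrZ R h J).
have rN : forall M, Fr h J (lindblad h J Gabs Gdph M) = Sig aN bN M :=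
  @repr4S R (fun M => Fr h J (lindblad h J Gabs Gdph M))
   (@FLD R h J Gabs Gdph) (@FLZ R h J Gabs Gdph).
have rZ : forall M, Fr h J (lindblad h J Gabs 0 M) = Sig aZ bZ M :=
  @repr4S R (fun M => Fr h J (lindblad h J Gabs 0 M))
   (@FLD R h J Gabs 0) (@FLZ R h J Gabs 0).
clearbody a0 b0 aN bN aZ bZ.
pose g t := Fr h J (lindblad h J Gabs Gdph (rhoN t)) -
            Fr h J (lindblad h J Gabs 0 (rho0t t)).
pose c := Fr h J (lindblad h J Gabs Gdph (rho0 h J)) -
          Fr h J (lindblad h J Gabs 0 (rho0 h J)).
have cpos : 0 < c.
  rewrite /c (lindG h J Gabs Gdph) FrD FrZ FrS2 addrC addKr.
  exact: pos_val.
have A0 : [set t : R | 0 <= t] 0 by rewrite /= lexx.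
have gcvg : g t @[t --> within [set t : R | 0 <= t] (nbhs 0)] --> c.
  have -> : g = (fun t => Sig aN bN (rhoN t)) - (fun t => Sig aZ bZ (rho0t t)).
    by apply/funext => t; rewrite /g; congr (_ - _); [exact: rN | exact: rZ].
  rewrite /c rN rZ; apply: cvgB; apply: cvg_Sig => k l.
  - have := (Ncont k l).1 => /subspace_continuousP /(_ 0 A0) H; rewrite /from_subspace /= N0 in H; exact: H.
  - have := (Ncont k l).2 => /subspace_continuousP /(_ 0 A0) H; rewrite /from_subspace /= N0 in H; exact: H.
  - have := (Zcont k l).1 => /subspace_continuousP /(_ 0 A0) H; rewrite /from_subspace /= Z0 in H; exact: H.
  - have := (Zcont k l).2 => /subspace_continuousP /(_ 0 A0) H; rewrite /from_subspace /= Z0 in H; exact: H.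
have [e e0 He] := near0_pos gcvg cpos.
exists e; split => // t /andP[t0 te].
rewrite -subr_gt0.
pose f s := work h J rhoN s - work h J rho0t s.
have fE : f = (fun s => Sig a0 b0 (rhoN s)) - (fun s => Sig a0 b0 (rho0t s)).
  by apply/funext => s; rewrite /f !workE !rF /= opprB addrA subrK.
have f0 : f 0 = 0 by rewrite /f !workE N0 Z0 subrr.
have Hder : forall x, x \in `]0, t[ -> is_derive x 1 f (g x).
  move=> x; rewrite in_itv /= => /andP[x0 xt].
  have -> : g x = Sig a0 b0 (lindblad h J Gabs Gdph (rhoN x)) -
                  Sig a0 b0 (lindblad h J Gabs 0 (rho0t x)) by rewrite /g; congr (_ - _); apply: rF.
  rewrite fE; apply: is_deriveB; apply: derive_Sig => k l.
  - exact: (Nder x x0 k l).1.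
  - exact: (Nder x x0 k l).2.
  - exact: (Zder x x0 k l).1.
  - exact: (Zder x x0 k l).2.
have Hcont : {within `[0, t], continuous f}.
  have sub : `[0, t] `<=` [set s : R | 0 <= s].
    by move=> s /=; rewrite in_itv /= => /andP[].
  rewrite fE; apply/subspace_continuousP => x Ax.
  apply: cvgB; apply: cvg_Sig => k l.
  - have := continuous_subspaceW sub (Ncont k l).1 => /subspace_continuousP /(_ x Ax) H.
    by rewrite /from_subspace /= in H; exact: H.
  - have := continuous_subspaceW sub (Ncont k l).2 => /subspace_continuousP /(_ x Ax) H.
    by rewrite /from_subspace /= in H; exact: H.
  - have := continuous_subspaceW sub (Zcont k l).1 => /subspace_continuousP /(_ x Ax) H.
    by rewrite /from_subspace /= in H; exact: H.
  - have := continuous_subspaceW sub (Zcont k l).2 => /subspace_continuousP /(_ x Ax) H.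
    by rewrite /from_subspace /= in H; exact: H.
have [c0 c0in Hc0] := MVT t0 Hder Hcont.
move: c0in; rewrite in_itv /= => /andP[c00 c0t].
have : 0 < f t.
  move: Hc0; rewrite f0 !subr0 => ->; apply: mulr_gt0 => //.
  apply: He; first exact: ltW.
  exact: lt_trans te.
by rewrite /f.
Qed.
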